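(* Let $X$ be a random variable taking values in a set $\mathcal{X}$, $Y \in [0,1]$ a target outcome and $\hat{Y} \in [0,1]$ an expert prediction, all jointly distributed. Let $\mathcal{F}$ be a class of functions $\mathcal{X} \to [0,1]$, $\alpha \ge 0$, and let $S \subseteq \mathcal{X}$ be $\alpha$-indistinguishable with respect to $\mathcal{F}$ and $Y$. Let $g : [0,1] \to [0,1]$ satisfy, for some $\eta \ge 0$, $$\mathbb{E}_S[(Y - g(\hat{Y}))^2] \le \mathbb{E}_S[(Y - \mathbb{E}_S[Y \mid \hat{Y}])^2] + \eta.$$ Then for every $f \in \mathcal{F}$, $$\mathbb{E}_S[(Y - g(\hat{Y}))^2] + 4\,\mathrm{Cov}_S(Y, \hat{Y})^2 \le \mathbb{E}_S[(Y - f(X))^2] + 2\alpha + \eta.$$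
   Context: For $S \subseteq \mathcal{X}$ with $\mathbb{P}(X \in S) > 0$, $\mathbb{E}_S$, $\mathrm{Cov}_S$ and $\mathbb{E}_S[\cdot \mid \hat{Y}]$ denote expectation, covariance and conditional expectation conditional on $\{X \in S\}$. A set $S$ is $\alpha$-indistinguishable with respect to $\mathcal{F}$ and $Y$ if $|\mathrm{Cov}(f(X), Y \mid X \in S)| \le \alpha$ for all $f \in \mathcal{F}$. *)

(* Defs.v *)
From HB Require Import structures.
From mathcomp Require Import all_boot all_order all_algebra.
From mathcomp Require Import all_classical all_reals all_analysis.
Set Implicit Arguments. Unset Strict Implicit. Unset Printing Implicit Defensive.
Import Order.TTheory GRing.Theory Num.Theory.
Local Open Scope classical_set_scope.
Local Open Scope ring_scope.

Definition condE {d} {T : measurableType d} {R : realType}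
  (P : probability T R) (A : set T) (Z : T -> R) : R :=
  fine (\int[P]_(w in A) (Z w)%:E)%E / fine (P A).

Definition condCov {d} {T : measurableType d} {R : realType}
  (P : probability T R) (A : set T) (U V : T -> R) : R :=
  condE P A (fun w => U w * V w) - condE P A U * condE P A V.

Definition indistinguishable {d d'} {T : measurableType d}
  {Xs : measurableType d'} {R : realType}
  (P : probability T R) (X : T -> Xs) (Y : T -> R)
  (F : set (Xs -> R)) (alpha : R) (S : set Xs) : Prop :=
  forall f, F f -> `| condCov P (X @^-1` S) (fun w => f (X w)) Y | <= alpha.

(* (h o Yh) is a version of the conditional expectation E_A[Y | Yh]
   (conditional on the event A). *)
Definition is_condexp {d} {T : measurableType d} {R : realType}
  (P : probability T R) (A : set T) (Y Yh : T -> R) (h : R -> R) : Prop :=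
  measurable_fun setT h /\
  P.-integrable A (fun w => (h (Yh w))%:E) /\
  forall B : set R, measurable B ->
    (\int[P]_(w in A `&` Yh @^-1` B) (Y w)%:E =
     \int[P]_(w in A `&` Yh @^-1` B) (h (Yh w))%:E)%E.

(* Main.v *)
Require Import Defs.
From HB Require Import structures.
From mathcomp Require Import all_boot all_order all_algebra.
From mathcomp Require Import all_classical all_reals all_analysis.
From mathcomp Require Import measurable_realfun ring lra.
Import Order.TTheory GRing.Theory Num.Theory.
Local Open Scope classical_set_scope.
Local Open Scope ring_scope.

Lemma bint {d} {T : measurableType d} {R : realType} (P : probability T R)
  (A : set T) (f : T -> R) (M : R) :
  measurable A -> measurable_fun setT f -> (forall w, `|f w| <= M) ->
  P.-integrable A (EFin \o f).
Proof.
move=> mA mf fM; have M0 : 0 <= M by apply: le_trans (fM point) => //.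
apply/integrableP; split.
  by apply/measurable_EFinP; exact: measurable_funS mf.
apply: (le_lt_trans (@integral_le_bound _ _ _ P A (EFin \o f) M%:E _ _ _ _)) => //.
- by apply/measurable_EFinP; exact: measurable_funS mf.
- by apply: aeW => x _ /=; rewrite lee_fin.
- rewrite lte_mul_pinfty // ?lee_fin //.
  by rewrite (le_lt_trans (probability_le1 _ mA)) // ltry.
Qed.

Definition bm {d} {T : measurableType d} {R : realType} (f : T -> R) :=
  measurable_fun setT f /\ exists M, forall w, `|f w| <= M.

Lemma bmD {d} {T : measurableType d} {R : realType} {f g : T -> R} :
  bm f -> bm g -> bm (fun w => f w + g w).
Proof.
move=> [mf [M fM]] [mg [N gN]]; split; first exact: measurable_funD.
by exists (M + N) => w; apply: le_trans (ler_normD _ _) _; apply: lerD.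
Qed.

Lemma bmM {d} {T : measurableType d} {R : realType} {f g : T -> R} :
  bm f -> bm g -> bm (fun w => f w * g w).
Proof.
move=> [mf [M fM]] [mg [N gN]]; split; first exact: measurable_funM.
by exists (M * N) => w; rewrite normrM; apply: ler_pM.
Qed.

Lemma bm_cst {d} {T : measurableType d} {R : realType} (c : R) :
  bm (fun _ : T => c).
Proof. by split; [exact: measurable_cst | exists `|c|]. Qed.

Lemma bm01 {d} {T : measurableType d} {R : realType} (f : T -> R) :
  measurable_fun setT f -> (forall w, 0 <= f w <= 1) -> bm f.
Proof.
move=> mf f01; split => //; exists 1 => w.
by have /andP[f0 f1] := f01 w; rewrite ger0_norm.
Qed.

Fixpoint allbm {d} {T : measurableType d} {R : realType} (s : seq (R * (T -> R))) : Prop :=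
  match s with [::] => True | x :: s => bm x.2 /\ allbm s end.

Lemma bm_sum {d} {T : measurableType d} {R : realType} (s : seq (R * (T -> R))) :
  allbm s -> bm (fun w => \sum_(p <- s) p.1 * p.2 w).
Proof.
elim: s => [|x s IH] /= H.
  by under [X in bm X]funext do rewrite big_nil; exact: bm_cst.
under [X in bm X]funext do rewrite big_cons.
case: H => H1 H2; apply: bmD; last exact: IH.
by apply: bmM; [exact: bm_cst| exact: H1].
Qed.

Lemma condE_D {d} {T : measurableType d} {R : realType} (P : probability T R)
  (A : set T) (f g : T -> R) : measurable A -> bm f -> bm g ->
  condE P A (fun w => f w + g w) = condE P A f + condE P A g.
Proof.
move=> mA [mf [M fM]] [mg [N gN]]; rewrite /condE -mulrDl; congr (_ / _).
move: (@RintegralD _ _ _ P A f g mA (bint P A f M mA mf fM) (bint P A g N mA mg gN)).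
rewrite /Rintegral => <-. done.
Qed.

Lemma condE_Z {d} {T : measurableType d} {R : realType} (P : probability T R)
  (A : set T) (c : R) (f : T -> R) : measurable A -> bm f ->
  condE P A (fun w => c * f w) = c * condE P A f.
Proof.
move=> mA [mf [M fM]]; rewrite /condE mulrA; congr (_ / _).
exact: (@RintegralZl _ _ _ P A f c mA (bint P A f M mA mf fM)).
Qed.

Lemma condE_cst {d} {T : measurableType d} {R : realType} (P : probability T R)
  (A : set T) (c : R) : measurable A -> (0 < P A)%E ->
  condE P A (fun _ => c) = c.
Proof.
move=> mA PA; rewrite /condE.
have -> : fine (\int[P]_(w in A) c%:E)%E = \int[P]_(w in A) c by [].
rewrite Rintegral_cst // mulfK //.
apply: lt0r_neq0; apply: fine_gt0; rewrite PA /=.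
by rewrite (le_lt_trans (probability_le1 _ mA)) // ltry.
Qed.

Lemma condE_ge0 {d} {T : measurableType d} {R : realType} (P : probability T R)
  (A : set T) (f : T -> R) : (forall w, 0 <= f w) -> 0 <= condE P A f.
Proof.
move=> f0; rewrite /condE divr_ge0 //.
  by apply: (@Rintegral_ge0 _ _ _ P A f) => x _.
by apply: fine_ge0; apply: measure_ge0.
Qed.

Lemma condE_ext {d} {T : measurableType d} {R : realType} (P : probability T R)
  (A : set T) (f g : T -> R) : (forall w, f w = g w) ->
  condE P A f = condE P A g.
Proof. by move=> fg; congr condE; apply: funext. Qed.

Lemma condE_lin {d} {T : measurableType d} {R : realType} (P : probability T R)
  (A : set T) (s : seq (R * (T -> R))) : measurable A ->
  allbm s ->
  condE P A (fun w => \sum_(p <- s) p.1 * p.2 w) =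
  \sum_(p <- s) p.1 * condE P A p.2.
Proof.
move=> mA; elim: s => [|x s IH] /= H.
  rewrite big_nil (@condE_ext _ _ _ P A _ (fun _ => 0)); last by move=> w; rewrite big_nil.
  rewrite /condE; have -> : fine (\int[P]_(w in A) (0:R)%:E)%E = \int[P]_(w in A) (0:R) by [].
  by rewrite Rintegral_cst // !mul0r.
rewrite big_cons (@condE_ext _ _ _ P A _ (fun w => x.1 * x.2 w + \sum_(p <- s) p.1 * p.2 w)).
  case: H => H1 H2; rewrite condE_D //.
  - by rewrite condE_Z // ?IH.
  - by apply: bmM; [exact: bm_cst| exact: H1].
  - exact: bm_sum.
by move=> w; rewrite big_cons.
Qed.

Lemma small0 {R : realType} (x c : R) : (forall n, `|x| <= c / 2 ^+ n) -> x = 0.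
Proof.
move=> H; have c0 : 0 <= c by have := H 0%N; rewrite expr0 divr1; apply: le_trans.
have [//|xn0] := eqVneq x 0; exfalso.
have e0 : 0 < `|x| by rewrite normr_gt0.
have := archi_boundP (divr_ge0 c0 (ltW e0)).
set k := Num.bound _ => hk.
have h2 : (k%:R : R) <= 2 ^+ k.
  by rewrite -natrX ler_nat ltnW // ltn_expl.
have := H k; rewrite ler_pdivlMr ?exprn_gt0 // => h3.
have : c / `|x| < 2 ^+ k by apply: lt_le_trans h2.
rewrite ltr_pdivrMr // => h4.
have : c < c by apply: lt_le_trans h4 _; rewrite mulrC.
by rewrite ltxx.
Qed.

Lemma ortho_n {d} {T : measurableType d} {R : realType} (P : probability T R)
  (A : set T) (D Z : T -> R) :
  measurable A -> measurable_fun setT D -> (forall w, `|D w| <= 1) ->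
  measurable_fun setT Z ->
  (forall B, measurable B -> \int[P]_(w in A `&` Z @^-1` B) D w = 0) ->
  forall n (c : R) (psi : R -> R), measurable_fun setT psi -> 0 <= c ->
  (forall w, 0 <= psi (Z w) <= c) ->
  `| \int[P]_(w in A) (D w * psi (Z w)) | <= c / 2 ^+ n.
Proof.
move=> mA mD D1 mZ HB n; elim: n => [|n IH] c psi mpsi c0 pc.
  rewrite expr0 divr1.
  have bD : bm D by split => //; exists 1.
  have bP : bm (fun w => psi (Z w)).
    split; first exact: measurableT_comp.
    by exists c => w; have /andP[h1 h2] := pc w; rewrite ger0_norm.
  have [mDP [M HM]] := bmM bD bP.
  apply: le_trans (le_normr_Rintegral mA (bint P A _ M mA mDP HM)) _.
  apply: le_trans (_ : \int[P]_(w in A) c <= c).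
    apply: le_Rintegral => //.
    - apply: (bint P A _ M mA) => //; first exact: measurableT_comp.
      by move=> w; rewrite normr_id.
    - by apply: (bint P A _ `|c| mA) => //; exact: measurable_cst.
    move=> x _; rewrite normrM; have /andP[h1 h2] := pc x.
    by rewrite (ger0_norm h1) -[leRHS]mul1r ler_pM.
  rewrite Rintegral_cst // ler_piMr //.
  rewrite -lee_fin fineK ?probability_le1 //.
  by rewrite ge0_fin_numE // (le_lt_trans (probability_le1 _ mA)) // ltry.
have bD : bm D by split => //; exists 1.
have bI : forall f, bm f -> P.-integrable A (EFin \o f).
  by move=> f [mf [M HM]]; exact: (bint P A f M mA mf HM).
set B := psi @^-1` `[c / 2, +oo[.
have mB : measurable B.
  by have := mpsi measurableT _ (measurable_itv `[c / 2, +oo[); rewrite setTI.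
set psi' := fun t => psi t - c / 2 * \1_B t.
have mpsi' : measurable_fun setT psi'.
  apply: measurable_funB => //; apply: measurable_funM.
    exact: measurable_cst.
  exact: measurable_indic.
have c20 : 0 <= c / 2 by rewrite divr_ge0.
have inB : forall t, (t \in B) = (c / 2 <= psi t).
  move=> t; apply/idP/idP.
    by move/set_mem; rewrite /B /preimage /= in_itv /= andbT.
  by move=> h; apply/mem_set; rewrite /B /preimage /= in_itv /= h.
have pc' : forall w, 0 <= psi' (Z w) <= c / 2.
  move=> w; rewrite /psi' indicE inB; have /andP[h1 h2] := pc w.
  have [h|h] := leP (c / 2) (psi (Z w)).
    by rewrite mulr1 subr_ge0 h /= lerBlDl -splitr.
  by rewrite mulr0 subr0 h1 /= ltW.
have IH' := IH (c / 2) psi' mpsi' c20 pc'.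
have bpsi' : bm (fun w => psi' (Z w)).
  split; first exact: measurableT_comp.
  by exists (c / 2) => w; have /andP[h1 h2] := pc' w; rewrite ger0_norm.
have bind : bm (fun w => \1_B (Z w) : R).
  split; first by apply: measurableT_comp => //; exact: measurable_indic.
  by exists 1 => w; rewrite indicE; case: (_ \in _); rewrite ?normr1 ?normr0.
have -> : \int[P]_(w in A) (D w * psi (Z w)) =
   \int[P]_(w in A) (D w * psi' (Z w)) + c / 2 * \int[P]_(w in A) (D w * \1_B (Z w)).
  rewrite -(RintegralZl (c / 2) mA (bI _ (bmM bD bind))).
  rewrite -(RintegralD mA (bI _ (bmM bD bpsi'))); last first.
    by apply: (bI (fun w => c / 2 * (D w * \1_B (Z w)))); apply: bmM;
      [exact: bm_cst| exact: bmM bD bind].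
  by apply: eq_Rintegral => x _; rewrite /psi'; ring.
have -> : \int[P]_(w in A) (D w * \1_B (Z w)) = 0.
  rewrite -(HB B mB) Rintegral_mkcondr; apply: eq_Rintegral => x _.
  rewrite patchE indicE.
  have -> : (x \in Z @^-1` B) = (Z x \in B).
    by apply/idP/idP => /set_mem h; apply/mem_set.
  by case: (Z x \in B); rewrite ?mulr1 ?mulr0.
rewrite mulr0 addr0; apply: le_trans IH' _.
by rewrite exprS invfM mulrA.
Qed.

Lemma null_pos {d} {T : measurableType d} {R : realType} (P : probability T R)
  (E : set T) (u : T -> R) : measurable E -> measurable_fun setT u ->
  (forall x, E x -> 0 < u x) -> (\int[P]_(x in E) (u x)%:E = 0)%E -> P E = 0%E.
Proof.
move=> mE mu upos i0.
have mu' : measurable_fun E (EFin \o u).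
  by apply/measurable_EFinP; exact: measurable_funS mu.
have : (\int[P]_(x in E) `|(EFin \o u) x| = 0)%E.
  rewrite -i0; apply: eq_integral => x /set_mem Ex /=.
  by rewrite ger0_norm // ltW // upos.
move/(ae_eq_integral_abs P mE mu') => [N [mN N0 sub]].
apply: (subset_measure0 mE mN _ N0) => x Ex; apply: sub => /= /(_ Ex) /eqP.
by rewrite eqe => /eqP ux0; move: (upos x Ex); rewrite ux0 ltxx.
Qed.

Lemma ortho_cond {d} {T : measurableType d} {R : realType} (P : probability T R)
  (A : set T) (D Z : T -> R) :
  measurable A -> measurable_fun setT D -> (forall w, `|D w| <= 1) ->
  measurable_fun setT Z ->
  (forall B, measurable B -> \int[P]_(w in A `&` Z @^-1` B) D w = 0) ->
  forall (c : R) (psi : R -> R), measurable_fun setT psi -> 0 <= c ->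
  (forall w, 0 <= psi (Z w) <= c) ->
  \int[P]_(w in A) (D w * psi (Z w)) = 0.
Proof.
move=> mA mD D1 mZ HB c psi mpsi c0 pc; apply: (small0 _ c) => n.
exact: ortho_n.
Qed.

Lemma condE_lin' {d} {T : measurableType d} {R : realType} (P : probability T R)
  (A : set T) (s : seq (R * (T -> R))) (f : T -> R) : measurable A ->
  allbm s -> (forall w, f w = \sum_(p <- s) p.1 * p.2 w) ->
  condE P A f = \sum_(p <- s) p.1 * condE P A p.2.
Proof.
move=> mA hs hf; rewrite (@condE_ext _ _ _ P A f _ hf); exact: condE_lin.
Qed.

Lemma mEF {d} {T : measurableType d} {R : realType} (f : T -> R) (D : set T) :
  measurable_fun setT f -> measurable_fun D (EFin \o f).
Proof. by move=> mf; apply/measurable_EFinP; exact: measurable_funS mf. Qed.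

Theorem corollary2 (d d' : measure_display) (T : measurableType d)
  (Xs : measurableType d') (R : realType) (P : probability T R)
  (X : T -> Xs) (Y Yh : T -> R)
  (F : set (Xs -> R)) (alpha eta : R) (S : set Xs) (g : R -> R) :
  measurable_fun setT X ->
  measurable_fun setT Y ->
  measurable_fun setT Yh ->
  (forall w, 0 <= Y w <= 1) ->
  (forall w, 0 <= Yh w <= 1) ->
  (forall f, F f -> measurable_fun setT f /\ forall x, 0 <= f x <= 1) ->
  0 <= alpha ->
  measurable S ->
  (0 < P (X @^-1` S))%E ->
  indistinguishable P X Y F alpha S ->
  measurable_fun setT g ->
  (forall t, 0 <= t <= 1 -> 0 <= g t <= 1) ->
  0 <= eta ->
  (exists h, is_condexp P (X @^-1` S) Y Yh h /\
     condE P (X @^-1` S) (fun w => (Y w - g (Yh w)) ^+ 2)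
       <= condE P (X @^-1` S) (fun w => (Y w - h (Yh w)) ^+ 2) + eta) ->
  forall f, F f ->
    condE P (X @^-1` S) (fun w => (Y w - g (Yh w)) ^+ 2)
      + 4 * (condCov P (X @^-1` S) Y Yh) ^+ 2
    <= condE P (X @^-1` S) (fun w => (Y w - f (X w)) ^+ 2) + 2 * alpha + eta.
Proof.
move=> mX mY mYh HY HYh HF alpha0 mS PA Hind mg g01 eta0 [h [[mh [ih hB]] hg]] f Ff.
have cov := Hind f Ff; rewrite /condCov /= in cov.
move: PA cov hg ih hB; set A := X @^-1` S => PA cov hg ih hB.
have mA : measurable A by have := mX measurableT S mS; rewrite setTI.
have [mf f01] := HF f Ff.
have mhYh : measurable_fun setT (fun x => h (Yh x)) := measurableT_comp mh mYh.
have mpre : forall B, measurable B -> measurable (Yh @^-1` B).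
  by move=> B mB; have := mYh measurableT B mB; rewrite setTI.
have mB1 : measurable (h @^-1` `]1, +oo[).
  by have := mh measurableT _ (measurable_itv `]1, +oo[); rewrite setTI.
have mB2 : measurable (h @^-1` `]-oo, 0[).
  by have := mh measurableT _ (measurable_itv `]-oo, 0[); rewrite setTI.
set E1 := A `&` Yh @^-1` (h @^-1` `]1, +oo[).
set E2 := A `&` Yh @^-1` (h @^-1` `]-oo, 0[).
have mE1 : measurable E1 by apply: measurableI => //; exact: mpre.
have mE2 : measurable E2 by apply: measurableI => //; exact: mpre.
have iY : forall E, measurable E -> P.-integrable E (EFin \o Y).
  move=> E mE; apply: (bint P E Y 1 mE mY) => w.
  by have /andP[h1 h2] := HY w; rewrite ger0_norm.
have ihS : forall E, measurable E -> E `<=` A ->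
    P.-integrable E (EFin \o (fun w => h (Yh w))).
  by move=> E mE EA; apply: (integrableS mA mE EA ih).
have P1 : P E1 = 0%E.
  apply: (null_pos P E1 (fun x => h (Yh x) - Y x) mE1).
  - exact: measurable_funB.
  - move=> x [_ /=]; rewrite /preimage /= in_itv /= andbT => h1.
    have /andP[_ y1] := HY x; rewrite subr_gt0; exact: le_lt_trans y1 h1.
  - under eq_integral do rewrite EFinB.
    rewrite (integralB_EFin mE1 (ihS _ mE1 (@subIsetl _ _ _)) (iY _ mE1)).
    rewrite -(hB _ mB1) subee //; exact: integrable_fin_num (iY _ mE1).
have P2 : P E2 = 0%E.
  apply: (null_pos P E2 (fun x => Y x - h (Yh x)) mE2).
  - exact: measurable_funB.
  - move=> x [_ /=]; rewrite /preimage /= in_itv /= => h1.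
    have /andP[y0 _] := HY x; rewrite subr_gt0; exact: lt_le_trans h1 y0.
  - under eq_integral do rewrite EFinB.
    rewrite (integralB_EFin mE2 (iY _ mE2) (ihS _ mE2 (@subIsetl _ _ _))).
    rewrite -(hB _ mB2) subee //; exact: integrable_fin_num (iY _ mE2).
pose h' := fun t => Num.max 0 (Num.min 1 (h t)).
have mh' : measurable_fun setT h'.
  apply: measurable_maxr; first exact: measurable_cst.
  by apply: measurable_minr => //; exact: measurable_cst.
have h'01 : forall t, 0 <= h' t <= 1.
  by move=> t; rewrite /h' le_max lexx /= ge_max ler01 /= ge_min lexx.
have hh' : forall t, 0 <= h t <= 1 -> h' t = h t.
  by move=> t /andP[h0 h1]; rewrite /h' (min_r h1) (max_r h0).
have Hae : \forall x \ae P, A x -> h (Yh x) = h' (Yh x).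
  have n1 : P.-negligible E1 by exists E1; split.
  have n2 : P.-negligible E2 by exists E2; split.
  apply: (negligibleS _ (negligibleU n1 n2)) => x /= /not_implyP [Ax nH].
  have [h1|h1] := leP (h (Yh x)) 1; last first.
    by left; split => //; rewrite /preimage /= in_itv /= h1.
  have [h0|h0] := leP 0 (h (Yh x)); last first.
    by right; split => //; rewrite /preimage /= in_itv /= h0.
  by exfalso; apply: nH; rewrite hh' // h0 h1.
have hB' : forall B, measurable B ->
    (\int[P]_(w in A `&` Yh @^-1` B) (Y w)%:E =
     \int[P]_(w in A `&` Yh @^-1` B) (h' (Yh w))%:E)%E.
  move=> B mB; rewrite hB //; apply: ae_eq_integral.
  - by apply: measurableI => //; exact: mpre.
  - exact: (mEF (fun w => h (Yh w))).
  - by apply: (mEF (fun w => h' (Yh w))); exact: measurableT_comp.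
  - by apply: filterS Hae => x Hx [Ax _]; rewrite /= Hx.
have Hsq : condE P A (fun w => (Y w - h (Yh w)) ^+ 2) =
           condE P A (fun w => (Y w - h' (Yh w)) ^+ 2).
  rewrite /condE; congr (fine _ / _); apply: ae_eq_integral => //.
  - apply: (mEF (fun w => (Y w - h (Yh w)) ^+ 2)).
    by apply: measurable_funX; apply: measurable_funB.
  - apply: (mEF (fun w => (Y w - h' (Yh w)) ^+ 2)).
    by apply: measurable_funX; apply: measurable_funB => //; exact: measurableT_comp.
  - by apply: filterS Hae => x Hx Ax; rewrite /= Hx.
pose DD := fun w => Y w - h' (Yh w).
have mH : measurable_fun setT (fun w => h' (Yh w)) := measurableT_comp mh' mYh.
have mDD : measurable_fun setT DD := measurable_funB mY mH.
have D1 : forall w, `|DD w| <= 1.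
  move=> w; rewrite /DD ler_norml; have /andP[y0 y1] := HY w.
  have /andP[z0 z1] := h'01 (Yh w); apply/andP; split; lra.
have HBD : forall B, measurable B -> \int[P]_(w in A `&` Yh @^-1` B) DD w = 0.
  move=> B mB; have mAB : measurable (A `&` Yh @^-1` B).
    by apply: measurableI => //; exact: mpre.
  rewrite /DD (RintegralB mAB (iY _ mAB)); last first.
    apply: (bint P _ _ 1 mAB mH) => w.
    by have /andP[? ?] := h'01 (Yh w); rewrite ger0_norm.
  by rewrite /Rintegral (hB' _ mB) subrr.
have cE : forall u, \int[P]_(w in A) u w = 0 -> condE P A u = 0.
  by move=> u; rewrite /condE /Rintegral => ->; rewrite mul0r.
have z1 : condE P A (fun w => DD w * 1) = 0.
  apply: cE; apply: (ortho_cond P A DD Yh mA mDD D1 mYh HBD 1 (fun _ => 1)) => //.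
  by move=> w; rewrite ler01 lexx.
have z2 : condE P A (fun w => DD w * Yh w) = 0.
  apply: cE; apply: (ortho_cond P A DD Yh mA mDD D1 mYh HBD 1 (fun t => t)) => //.
have z3 : condE P A (fun w => DD w * h' (Yh w)) = 0.
  apply: cE; apply: (ortho_cond P A DD Yh mA mDD D1 mYh HBD 1 h') => //.
have bY : bm Y := bm01 Y mY HY.
have bZ : bm Yh := bm01 Yh mYh HYh.
have bH : bm (fun w => h' (Yh w)) := bm01 _ mH (fun w => h'01 (Yh w)).
have bF : bm (fun w => f (X w)) :=
  bm01 _ (measurableT_comp mf mX) (fun w => f01 (X w)).
have b1 : bm (fun _ : T => (1 : R)) := bm_cst 1.
have bYY := bmM bY bY.
have bYZ := bmM bY bZ.
have bZZ := bmM bZ bZ.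
have bYH := bmM bY bH.
have bHH := bmM bH bH.
have bHZ := bmM bH bZ.
have bFY := bmM bF bY.
have bFF := bmM bF bF.
have one : condE P A (fun _ => 1) = 1 by rewrite condE_cst.
have e1 := condE_lin' P A [:: (1, Y); (-1, fun w => h' (Yh w))]
  (fun w => DD w * 1) mA (conj bY (conj bH I))
  (ltac:(by move=> w; rewrite !big_cons big_nil /= /DD; ring)).
have e2 := condE_lin' P A [:: (1, fun w => Y w * Yh w); (-1, fun w => h' (Yh w) * Yh w)]
  (fun w => DD w * Yh w) mA (conj bYZ (conj bHZ I))
  (ltac:(by move=> w; rewrite !big_cons big_nil /= /DD; ring)).
have e3 := condE_lin' P A [:: (1, fun w => Y w * h' (Yh w)); (-1, fun w => h' (Yh w) * h' (Yh w))]
  (fun w => DD w * h' (Yh w)) mA (conj bYH (conj bHH I))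
  (ltac:(by move=> w; rewrite !big_cons big_nil /= /DD; ring)).
have e4 := condE_lin' P A [:: (1, fun w => Y w * Y w); (-2, fun w => Y w * h' (Yh w));
    (1, fun w => h' (Yh w) * h' (Yh w))]
  (fun w => (Y w - h' (Yh w)) ^+ 2) mA (conj bYY (conj bYH (conj bHH I)))
  (ltac:(by move=> w; rewrite !big_cons big_nil /=; ring)).
have e5 := condE_lin' P A [:: (1, fun w => Y w * Y w); (-2, fun w => f (X w) * Y w);
    (1, fun w => f (X w) * f (X w))]
  (fun w => (Y w - f (X w)) ^+ 2) mA (conj bYY (conj bFY (conj bFF I)))
  (ltac:(by move=> w; rewrite !big_cons big_nil /=; ring)).
have N1 : forall a0 b0 l : R,
  0 <= 1 * condE P A (fun w => h' (Yh w) * h' (Yh w))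
     + (l ^+ 2 * condE P A (fun w => Yh w * Yh w)
     + ((- a0 + l * b0) ^+ 2 * 1
     + (- 2 * l * condE P A (fun w => h' (Yh w) * Yh w)
     + (2 * (- a0 + l * b0) * condE P A (fun w => h' (Yh w))
     + (- 2 * l * (- a0 + l * b0) * condE P A Yh + 0))))).
  move=> a0 b0 l.
  have e := condE_lin' P A [:: (1, fun w => h' (Yh w) * h' (Yh w));
     (l ^+ 2, fun w => Yh w * Yh w); ((- a0 + l * b0) ^+ 2, fun _ => 1);
     (- 2 * l, fun w => h' (Yh w) * Yh w); (2 * (- a0 + l * b0), fun w => h' (Yh w));
     (- 2 * l * (- a0 + l * b0), Yh)]
    (fun w => (h' (Yh w) - a0 - l * (Yh w - b0)) ^+ 2) mA
    (conj bHH (conj bZZ (conj b1 (conj bHZ (conj bH (conj bZ I))))))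
    (ltac:(by move=> w; rewrite !big_cons big_nil /=; ring)).
  rewrite !big_cons big_nil /= one in e; rewrite -e.
  by apply: condE_ge0 => w; exact: sqr_ge0.
have N2 : 0 <= condE P A Yh - condE P A (fun w => Yh w * Yh w).
  have e := condE_lin' P A [:: (1, Yh); (-1, fun w => Yh w * Yh w)]
    (fun w => Yh w * (1 - Yh w)) mA (conj bZ (conj bZZ I))
    (ltac:(by move=> w; rewrite !big_cons big_nil /=; ring)).
  rewrite !big_cons big_nil /= in e.
  have : 0 <= condE P A (fun w => Yh w * (1 - Yh w)).
    apply: condE_ge0 => w; have /andP[q0 q1] := HYh w.
    by apply: mulr_ge0 => //; rewrite subr_ge0.
  rewrite e; lra.
have N3 : forall c0 : R, 0 <= condE P A (fun w => f (X w) * f (X w))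
    - 2 * c0 * condE P A (fun w => f (X w)) + c0 ^+ 2.
  move=> c0.
  have e := condE_lin' P A [:: (1, fun w => f (X w) * f (X w));
      (- 2 * c0, fun w => f (X w)); (c0 ^+ 2, fun _ => 1)]
    (fun w => (f (X w) - c0) ^+ 2) mA (conj bFF (conj bF (conj b1 I)))
    (ltac:(by move=> w; rewrite !big_cons big_nil /=; ring)).
  rewrite !big_cons big_nil /= one in e.
  have : 0 <= condE P A (fun w => (f (X w) - c0) ^+ 2).
    by apply: condE_ge0 => w; exact: sqr_ge0.
  rewrite e; lra.
rewrite !big_cons big_nil /= in e1 e2 e3 e4 e5.
rewrite z1 in e1; rewrite z2 in e2; rewrite z3 in e3.
rewrite Hsq e4 in hg; rewrite e5 /condCov.
move: cov; rewrite ler_norml => /andP[_ cv].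
set a := condE P A Y in e1 e2 e3 e4 e5 N1 N2 N3 hg cv *.
set b := condE P A Yh in e1 e2 e3 e4 e5 N1 N2 N3 hg cv *.
set Eh := condE P A (fun w => h' (Yh w)) in e1 e2 e3 e4 e5 N1 N2 N3 hg cv *.
set Ehh := condE P A (fun w => h' (Yh w) * h' (Yh w)) in e1 e2 e3 e4 e5 N1 N2 N3 hg cv *.
set Eyh := condE P A (fun w => Y w * h' (Yh w)) in e1 e2 e3 e4 e5 N1 N2 N3 hg cv *.
set Ehz := condE P A (fun w => h' (Yh w) * Yh w) in e1 e2 e3 e4 e5 N1 N2 N3 hg cv *.
set Eyz := condE P A (fun w => Y w * Yh w) in e1 e2 e3 e4 e5 N1 N2 N3 hg cv *.
set Ezz := condE P A (fun w => Yh w * Yh w) in e1 e2 e3 e4 e5 N1 N2 N3 hg cv *.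
set Ef := condE P A (fun w => f (X w)) in e1 e2 e3 e4 e5 N1 N2 N3 hg cv *.
set Eff := condE P A (fun w => f (X w) * f (X w)) in e1 e2 e3 e4 e5 N1 N2 N3 hg cv *.
set Efy := condE P A (fun w => f (X w) * Y w) in e1 e2 e3 e4 e5 N1 N2 N3 hg cv *.
set Eyy := condE P A (fun w => Y w * Y w) in e1 e2 e3 e4 e5 N1 N2 N3 hg cv *.
set Eg := condE P A (fun w => (Y w - g (Yh w)) ^+ 2) in e1 e2 e3 e4 e5 N1 N2 N3 hg cv *.
have EhE : Eh = a by lra.
have EhzE : Ehz = Eyz by lra.
have EyhE : Eyh = Ehh by lra.
have V : 0 <= Ehh - a ^+ 2 - 4 * (Eyz - a * b) ^+ 2.
  have := N1 a b (4 * (Eyz - a * b)); rewrite EhE EhzE => n1.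
  have h1 : 0 <= (4 * (Eyz - a * b)) ^+ 2 * (b - Ezz).
    by apply: mulr_ge0; [exact: sqr_ge0| lra].
  have h2 : 0 <= (4 * (Eyz - a * b)) ^+ 2 * (b - 1 / 2) ^+ 2.
    by apply: mulr_ge0; exact: sqr_ge0.
  lra.
have n3 := N3 Ef.
have sq := sqr_ge0 (Ef - a).
rewrite EyhE in hg.
lra.
Qed.
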